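(* Let $\psi$ be an $\mathcal{L}_\nu$-formula that is positive in $X$. Then for every belief model $(\Omega,\dots)$ for a game $G$, the operator $E\mapsto[\![\psi]\!]_E$ on $\mathcal P(\Omega)$ is monotonic; consequently $[\![\nu X.\psi]\!]=\bigcup\{E\subseteq\Omega: E\subseteq[\![\psi]\!]_E\}$.
   Context: Game, restrictions, $\mathcal{L}_O$, optimality conditions: $G=(T_1,\dots,T_n,<_1,\dots,<_n)$, $\ge_i$ reflexive closure of $<_i$; an optimality condition for $i$ is a closed first-order formula over atoms $C(a)$, $a\ge^i_cb$, constant $o$, interpreted in $(G,G',s)$ by $C(x)$ iff $\alpha(x)_j\in G'_j\ \forall j$ and $x\ge^i_zy$ iff $(\alpha(x)_i,\alpha(z)_{-i})\ge_i(\alpha(y)_i,\alpha(z)_{-i})$ ($o\mapsto s$); positive if all $C(\cdot)$ occur under an even number of negations. Belief model $(\Omega,\bar s_1,\dots,\bar s_n,P_1,\dots,P_n)$, $\bar s_i:\Omega\to T_i$, $P_i:\Omega\to2^\Omega$, $(G_E)_i=\{\bar s_i(u):u\in E\}$. $\mathcal{L}_\nu$: $\psi::=\mathit{rat}_{\phi_i}\mid X\mid\psi\wedge\psi\mid\neg\psi\mid\Box_i\psi\mid O_{\phi_i}\psi\mid\nu X.\psi$ ($\nu$-free body). Semantics: $[\![\mathit{rat}_{\phi_i}]\!]_E=\{\omega:(G,G_{P_i(\omega)},\bar s(\omega))\models\phi_i\}$, $[\![X]\!]_E=E$, intersections/complements, $[\![\Box_i\psi]\!]_E=\{\omega:P_i(\omega)\subseteq[\![\psi]\!]_E\}$,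 $[\![O_{\phi_i}\psi]\!]_E=\{\omega:(G,G_{[\![\psi]\!]_E},\bar s(\omega))\models\phi_i\}$, $[\![\nu X.\psi]\!]_E$ = outcome of transfinite iteration from $\Omega$ of $F\mapsto[\![\psi]\!]_F\cap F$ (intersections at limits). $\psi$ is positive in $X$ if each occurrence of $X$ is under an even number of negations and inside $O_{\phi_i}$ only when $\phi_i$ is positive. *)

(* Defs.v *)
From mathcomp Require Import all_boot.
Set Implicit Arguments. Unset Strict Implicit. Unset Printing Implicit Defensive.

Record game (n : nat) := Game {
  strat : 'I_n -> Type;
  pref  : 'I_n -> (forall j, strat j) -> (forall j, strat j) -> Prop }.

Arguments strat {n} g _ : rename.
Arguments pref {n} g _ _ _ : rename.

Definition profile n (G : game n) := forall j : 'I_n, strat G j.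

Definition gepref n (G : game n) (i : 'I_n) (x y : profile G) : Prop :=
  pref G i y x \/ x = y.
Arguments gepref {n} G i x y.

(* (s_i, p_{-i}) : profile p with the i-th component replaced by s *)
Definition upd n (T : 'I_n -> Type) (p : forall j, T j) (i : 'I_n) (s : T i)
  : forall j, T j :=
  fun j => match i =P j with ReflectT e => eq_rect i T s j e | ReflectF _ => p j end.

(* Variables of type V (nested de Bruijn); closed formulas have V = void. *)
Inductive oterm (V : Type) : Type :=
| OVar (v : V)
| OConst.
Arguments OConst {V}.

Inductive ocond (V : Type) : Type :=
| OC   : oterm V -> ocond V
| OGe  : oterm V -> oterm V -> oterm V -> ocond V    (* OGe a c b  is  a >=^i_c b *)
| ONeg : ocond V -> ocond V
| OAnd : ocond V -> ocond V -> ocond V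
| OEx  : ocond (option V) -> ocond V.
Arguments OC {V}. Arguments OGe {V}. Arguments ONeg {V}.
Arguments OAnd {V}. Arguments OEx {V}.

Definition oeval n (G : game n) (s : profile G) V (env : V -> profile G)
  (t : oterm V) : profile G :=
  match t with OVar v => env v | OConst => s end.

Fixpoint osat n (G : game n) (i : 'I_n) (G' : forall j, strat G j -> Prop)
  (s : profile G) V (f : ocond V) (env : V -> profile G) {struct f} : Prop :=
  match f with
  | OC a => forall j, G' j (oeval s env a j)
  | OGe a c b =>
      gepref G i (upd (oeval s env c) (oeval s env a i))
                 (upd (oeval s env c) (oeval s env b i))
  | ONeg g => ~ osat i G' s g env
  | OAnd g h => osat i G' s g env /\ osat i G' s h env
  | OEx g => exists x : profile G,
      osat i G' s g (fun o => match o with Some v => env v | None => x end)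
  end.

Definition omodels n (G : game n) (i : 'I_n) (G' : forall j, strat G j -> Prop)
  (s : profile G) (phi : ocond void) : Prop :=
  osat i G' s phi (fun v => match v with end).

(* positivity: every C(.) occurs under an even number of negations;
   b = true means "even number of negations so far" *)
Fixpoint posC V (b : bool) (f : ocond V) : Prop :=
  match f with
  | OC _ => b = true
  | OGe _ _ _ => True
  | ONeg g => posC (~~ b) g
  | OAnd g h => posC b g /\ posC b h
  | OEx g => posC b g
  end.

Definition positive_cond (phi : ocond void) : Prop := posC true phi.

Record bmodel n (G : game n) := BModel {
  world : Type;
  sbar  : forall i : 'I_n, world -> strat G i;
  poss  : 'I_n -> world -> world -> Prop }.

Arguments world {n g} b : rename.
Arguments sbar {n g} b _ _ : rename.
Arguments poss {n g} b _ _ _ : rename.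

Definition Gset n (G : game n) (M : bmodel G) (E : world M -> Prop)
  : forall j, strat G j -> Prop :=
  fun j t => exists u, E u /\ sbar M j u = t.

Definition sprof n (G : game n) (M : bmodel G) (w : world M) : profile G :=
  fun j => sbar M j w.

(* The stages of the transfinite iteration of f from W: the least class containing
   W, closed under f (successor steps) and under intersections (limit steps).
   The outcome is the intersection of all stages (= the final, stable stage). *)
Inductive stage (W : Type) (f : (W -> Prop) -> (W -> Prop)) : (W -> Prop) -> Prop :=
| stage_top : stage f (fun _ => True)
| stage_step F : stage f F -> stage f (f F)
| stage_lim (S : (W -> Prop) -> Prop) :
    (forall F, S F -> stage f F) -> stage f (fun w => forall F, S F -> F w).

Definition tf_iter (W : Type) (f : (W -> Prop) -> (W -> Prop)) : W -> Prop :=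
  fun w => forall F, stage f F -> F w.

Inductive fml (n : nat) : Type :=
| Rat  : 'I_n -> ocond void -> fml n
| FX   : fml n
| FAnd : fml n -> fml n -> fml n
| FNeg : fml n -> fml n
| Box  : 'I_n -> fml n -> fml n
| Opt  : 'I_n -> ocond void -> fml n -> fml n
| Nu   : fml n -> fml n.

Fixpoint nu_free n (psi : fml n) : Prop :=
  match psi with
  | Rat _ _ | FX => True
  | FAnd a b => nu_free a /\ nu_free b
  | FNeg a | Box _ a | Opt _ _ a => nu_free a
  | Nu _ => False
  end.

Fixpoint wf n (psi : fml n) : Prop :=
  match psi with
  | Rat _ _ | FX => True
  | FAnd a b => wf a /\ wf b
  | FNeg a | Box _ a | Opt _ _ a => wf a
  | Nu a => nu_free a
  end.

Fixpoint occX n (psi : fml n) : Prop :=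
  match psi with
  | Rat _ _ => False
  | FX => True
  | FAnd a b => occX a \/ occX b
  | FNeg a | Box _ a | Opt _ _ a => occX a
  | Nu _ => False
  end.

(* positivity in X (b = true: even number of negations so far); occurrences of X
   bound by an inner nu are not occurrences of the free variable X *)
Fixpoint posX n (b : bool) (psi : fml n) : Prop :=
  match psi with
  | Rat _ _ => True
  | FX => b = true
  | FAnd a c => posX b a /\ posX b c
  | FNeg a => posX (~~ b) a
  | Box _ a => posX b a
  | Opt _ phi a => posX b a /\ (occX a -> positive_cond phi)
  | Nu _ => True
  end.

Definition positive_in_X n (psi : fml n) : Prop := posX true psi.

Fixpoint sem n (G : game n) (M : bmodel G) (psi : fml n) (E : world M -> Prop)
  {struct psi} : world M -> Prop :=
  match psi with
  | Rat i phi => fun w => omodels i (Gset (poss M i w)) (sprof w) phi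
  | FX => E
  | FAnd a b => fun w => sem (M:=M) a E w /\ sem (M:=M) b E w
  | FNeg a => fun w => ~ sem (M:=M) a E w
  | Box i a => fun w => forall u, poss M i w u -> sem (M:=M) a E u
  | Opt i phi a => fun w => omodels i (Gset (sem (M:=M) a E)) (sprof w) phi
  | Nu a => tf_iter (fun F w => sem (M:=M) a F w /\ F w)
  end.
Arguments sem {n G} M psi E _.

(* Main.v *)
Require Import Defs.
From mathcomp Require Import all_boot.
From Stdlib Require Import Setoid Classical.

Fixpoint ocond_rectS (P : forall V : Set, ocond V -> Prop)
  (f1 : forall (V : Set) a, P V (OC a))
  (f2 : forall (V : Set) a c b, P V (OGe a c b))
  (f3 : forall (V : Set) g, P V g -> P V (ONeg g))
  (f4 : forall (V : Set) g, P V g -> forall h, P V h -> P V (OAnd g h))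
  (f5 : forall (V : Set) g, P (option V) g -> P V (OEx g))
  (V : Set) (f : ocond V) {struct f} : P V f :=
  match f with
  | OC a => f1 V a
  | OGe a c b => f2 V a c b
  | ONeg g => f3 V g (@ocond_rectS P f1 f2 f3 f4 f5 _ g)
  | OAnd g h => f4 V g (@ocond_rectS P f1 f2 f3 f4 f5 _ g) h (@ocond_rectS P f1 f2 f3 f4 f5 _ h)
  | OEx g => f5 V g (@ocond_rectS P f1 f2 f3 f4 f5 _ g)
  end.

Lemma osat_ext n (G : game n) (i : 'I_n) (G1 G2 : forall j, strat G j -> Prop)
  (s : profile G) (V : Set) (f : ocond V) :
  (forall j t, G1 j t <-> G2 j t) ->
  forall env, osat i G1 s f env <-> osat i G2 s f env.
Proof.
move=> H; elim/ocond_rectS: V / f => [V a|V a c b|V g IH|V g IHg h IHh|V g IH] env /=.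
- by split=> K j; apply/H.
- by [].
- by rewrite IH.
- by rewrite IHg IHh.
- by split=> -[x Hx]; exists x; apply/IH.
Qed.

Lemma osat_mono n (G : game n) (i : 'I_n) (G1 G2 : forall j, strat G j -> Prop)
  (s : profile G) (V : Set) (f : ocond V) :
  (forall j t, G1 j t -> G2 j t) ->
  forall b env, posC b f ->
  if b then osat i G1 s f env -> osat i G2 s f env
  else osat i G2 s f env -> osat i G1 s f env.
Proof.
move=> H; elim/ocond_rectS: V / f => [V a|V a c b|V g IH|V g IHg h IHh|V g IH] bb env /=.
- by move=> ->; move=> K j; apply/H.
- by case: bb.
- move=> P; have := IH (~~ bb) env P; case: bb {P} => /= K N1 N2; exact: N1 (K N2).
- move=> [Pg Ph]; have := IHg bb env Pg; have := IHh bb env Ph.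
  by case: bb {Pg Ph} => /= K1 K2 [A B]; split; auto.
- move=> P; have K x := IH bb (fun o => match o with Some v => env v | None => x end) P.
  by case: bb {P} K => K [x Hx]; exists x; apply: K.
Qed.

Lemma sem_noocc n (G : game n) (M : bmodel G) (psi : fml n) :
  ~ occX psi -> forall E F w, sem M psi E w <-> sem M psi F w.
Proof.
elim: psi => [i phi|| a IHa c IHc|a IHa|i a IHa|i phi a IHa|a IHa] /= No E F w.
- by [].
- by exfalso; apply: No.
- have Na : ~ occX a by move=> K; apply: No; left.
  have Nc : ~ occX c by move=> K; apply: No; right.
  by rewrite (IHa Na E F) (IHc Nc E F).
- by rewrite (IHa No E F).
- by split=> K u P; apply/(IHa No E F); apply: K.
- apply: osat_ext => j t; rewrite /Gset.
  by split=> -[u [Hu Eu]]; exists u; split=> //; apply/(IHa No E F).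
- by [].
Qed.

Lemma sem_mono n (G : game n) (M : bmodel G) (psi : fml n) :
  forall b, posX b psi -> forall E F : world M -> Prop, (forall w, E w -> F w) ->
  forall w, if b then sem M psi E w -> sem M psi F w
            else sem M psi F w -> sem M psi E w.
Proof.
elim: psi => [i phi|| a IHa c IHc|a IHa|i a IHa|i phi a IHa|a IHa] b /= P E F EF w.
- by case: b.
- by subst b; apply: EF.
- case: P => Pa Pc; have := IHa b Pa E F EF w; have := IHc b Pc E F EF w.
  by case: b {Pa Pc} => K1 K2 [A B]; split; auto.
- have := IHa (~~ b) P E F EF w; case: b {P} => /= K N1 N2; exact: N1 (K N2).
- have K u := IHa b P E F EF u.
  by case: b {P} K => K H u Pu; apply: K; apply: H.
- case: P => Pa Ph.
  case: (classic (occX a)) => Oc.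
  + have Pp := Ph Oc.
    case: b Pa => Pa.
    * refine (@osat_mono _ _ _ _ _ _ _ _ _ true _ Pp) => j t [u [Hu Eu]]; exists u; split=> //.
      exact: (IHa true Pa E F EF u).
    * refine (@osat_mono _ _ _ _ _ _ _ _ _ true _ Pp) => j t [u [Hu Eu]]; exists u; split=> //.
      exact: (IHa false Pa E F EF u).
  + have Eq : osat i (Gset (sem M a E)) (sprof w) phi (fun v : void => match v with end)
       <-> osat i (Gset (sem M a F)) (sprof w) phi (fun v : void => match v with end).
      apply: osat_ext => j t; rewrite /Gset.
      by split=> -[u [Hu Eu]]; exists u; split=> //; apply/(@sem_noocc _ _ M a Oc E F u).
    by rewrite /omodels; case: b Pa => _; rewrite Eq.
- by case: b.
Qed.

Theorem mainTheorem8 (n : nat) (G : game n) (psi : fml n) :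
  wf psi -> positive_in_X psi ->
  forall M : bmodel G,
    (forall E F : world M -> Prop,
        (forall w, E w -> F w) -> forall w, sem M psi E w -> sem M psi F w) /\
    (nu_free psi -> forall (E0 : world M -> Prop) (w : world M),
        sem M (Nu psi) E0 w <->
        exists E : world M -> Prop, (forall u, E u -> sem M psi E u) /\ E w).
Proof.
move=> _ Pos M.
have Mono : forall E F : world M -> Prop,
    (forall w, E w -> F w) -> forall w, sem M psi E w -> sem M psi F w.
  by move=> E F EF w; exact: (@sem_mono _ _ M psi true Pos).
split=> // _ E0 w /=; split.
- move=> H; exists (tf_iter (fun F w => sem M psi F w /\ F w)); split=> //.
  move=> u Hu.
  have St : stage (fun F w => sem M psi F w /\ F w)
              (tf_iter (fun F w => sem M psi F w /\ F w)).
    exact: (stage_lim (S := stage (fun F w => sem M psi F w /\ F w))).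
  exact: (Hu _ (stage_step St)).1.
- move=> [E [HE Ew]] F St.
  suff K : forall u, E u -> F u by apply: K.
  elim: St => [//|F' _ IH|S _ IH] u Eu.
  + by split; [apply: (Mono E) => //; apply: HE | apply: IH].
  + by move=> F' SF; apply: IH.
Qed.
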